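(* Let $k$ be a field, $R=k[x_1,\ldots,x_n]$, and let $I\subset R$ be a strongly stable monomial ideal whose last generator is $M_\omega=x^\omega$ with $\omega=(\omega_1,\ldots,\omega_\mu)\in\mathbb{Z}^\mu_{\ge0}$, $\omega_\mu>0$, where $\mu\ge 2$. Suppose $I$ contains $x_{\mu-1}^t$ for some $t>0$. Then \[ |\mathcal{I}_{\mu-1}|\le \sum_{\alpha\in\mathcal{I}_{\mu-2}} f_{\mu-1}(\alpha), \] with equality if and only if $\omega=(0,\ldots,0,\omega_\mu)$, i.e. $M_\omega=x_\mu^{\omega_\mu}$. In particular $\mathcal{I}_{\mu-1}$ is a finite set.
   Context: Monomial order: degree reverse lexicographic. For monomials $M=x^\alpha$, $N=x^\beta$ in $R$, $M>N$ iff $\deg M>\deg N$, or $\deg M=\deg N$ and for the largest index $s$ with $\alpha_s\ne\beta_s$ one has $\alpha_s<\beta_s$. For $\alpha\in\mathbb{Z}^s_{\ge0}$ ($s\le n$) write $x^\alpha=x_1^{\alpha_1}\cdots x_s^{\alpha_s}$ and $|\alpha|=\sum\alpha_j$; for $\alpha,\beta\in\mathbb{Z}^s_{\ge0}$ set $\alpha\le\beta$ iff $x^\alpha\le x^\beta$. A monomial ideal $I$ is strongly stable if for every monomial $M$, $x_iM\in I$ implies $x_jM\in I$ for all $j<i$. $\mathcal{G}(I)$ denotes the minimal set of monomial generators. For a monomial $M$, $\max M$ is the largest $i$ with $x_i\mid M$. The last generator $M_\omega$ of $I$ is the element of $\mathcal{G}(I)$ of maximal degree which is smallest (in the order) among elements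 of $\mathcal{G}(I)$ of that degree; $\mu=\max M_\omega$. Define $f_1=\min\{t: x_1^t\in I\}$ and, for $2\le i\le\mu$ and $\alpha\in\mathbb{Z}^{i-1}_{\ge0}$, $f_i(\alpha)=\min\{t\ge0: x^\alpha x_i^t\in I\}\in\mathbb{Z}_{\ge0}\cup\{\infty\}$ (minimum of the empty set is $\infty$). For $1\le i\le\mu-2$, $\mathcal{I}_i$ is the set of $(\alpha_1,\ldots,\alpha_i)\in\mathbb{Z}^i_{\ge0}$ with $0\le\alpha_1<f_1$ and $0\le\alpha_j<f_j(\alpha_1,\ldots,\alpha_{j-1})$ for $2\le j\le i$; $\mathcal{I}_{\mu-1}$ is the set of $(\alpha_1,\ldots,\alpha_{\mu-1})\in\mathbb{Z}^{\mu-1}_{\ge0}$ satisfying the same inequalities for $j\le\mu-1$ and additionally $(\alpha_1,\ldots,\alpha_{\mu-1})\ge(\omega_1,\ldots,\omega_{\mu-1})$. Convention: $\mathcal{I}_0$ consists of the empty tuple, on which $f_1$ takes the value $f_1$. *)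

(* Defs.v *)
From Stdlib Require Import ClassicalEpsilon.
From mathcomp Require Import all_boot.
Set Implicit Arguments. Unset Strict Implicit. Unset Printing Implicit Defensive.

Section Defs.
Variable n : nat.

(* A monomial x^a of R = k[x_1..x_n] is its exponent vector; variable x_(j+1)
   corresponds to the ordinal j : 'I_n (0-based). *)
Definition mono := {ffun 'I_n -> nat}.

(* exponent of x_(j+1) in a, extended by 0 outside 0..n-1 *)
Definition ev (a : mono) (j : nat) : nat := odflt 0 (omap a (insub j : option 'I_n)).

Definition mdeg (a : mono) : nat := \sum_(j < n) a j.

Definition mdiv (a b : mono) : bool := [forall j, a j <= b j].

Definition mulx (i : 'I_n) (a : mono) : mono := [ffun j => a j + (j == i)].

(* A monomial ideal, represented by its set of monomials (upward closed). *)
Definition monomial_ideal (I : pred mono) : Prop :=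
  forall a b, a \in I -> mdiv a b -> b \in I.

Definition strongly_stable (I : pred mono) : Prop :=
  forall (a : mono) (i j : 'I_n), j < i -> mulx i a \in I -> mulx j a \in I.

Definition min_gen (I : pred mono) (a : mono) : Prop :=
  a \in I /\ forall b, b \in I -> mdiv b a -> b = a.

(* degrevlex on exponent vectors of length m (given as functions on indices
   0..m-1): dgt m a b  <->  x^a > x^b *)
Definition dgt (m : nat) (a b : nat -> nat) : Prop :=
  (\sum_(j < m) b j < \sum_(j < m) a j) \/
  (\sum_(j < m) a j = \sum_(j < m) b j /\
   exists s, [/\ s < m, a s < b s & forall t, s < t < m -> a t = b t]).

Definition dge (m : nat) (a b : nat -> nat) : Prop :=
  (forall j, j < m -> a j = b j) \/ dgt m a b.

Definition last_gen (I : pred mono) (w : mono) : Prop :=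
  [/\ min_gen I w,
      (forall b, min_gen I b -> mdeg b <= mdeg w) &
      (forall b, min_gen I b -> mdeg b = mdeg w -> b <> w -> dgt n (ev b) (ev w))].

(* x^alpha * x_i^t, for alpha in Z^(i-1) (i is 1-based) *)
Definition xmon (alpha : seq nat) (i t : nat) : mono :=
  [ffun j : 'I_n => if j < i.-1 then nth 0 alpha j
                    else if (j : nat) == i.-1 then t else 0].

(* f_i(alpha) = min { t : x^alpha x_i^t in I }, None standing for infinity;
   f 1 [::] is f_1. *)
Definition f (I : pred mono) (i : nat) (alpha : seq nat) : option nat :=
  match excluded_middle_informative (exists t, xmon alpha i t \in I) with
  | left h => Some (ex_minn h)
  | right _ => None
  end.

Definition ltf (x : nat) (o : option nat) : bool :=
  if o is Some v then x < v else true.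

Definition inbox (I : pred mono) (i : nat) (alpha : seq nat) : Prop :=
  size alpha = i /\ forall j, j < i -> ltf (nth 0 alpha j) (f I j.+1 (take j alpha)).

(* calI_i for i <= mu-2 *)
Definition calI (I : pred mono) (i : nat) (alpha : seq nat) : Prop := inbox I i alpha.

Definition calI_last (I : pred mono) (w : mono) (mu : nat) (alpha : seq nat) : Prop :=
  inbox I mu.-1 alpha /\ dge mu.-1 (nth 0 alpha) (ev w).

End Defs.

(* Main.v *)
Require Import Defs.
From mathcomp Require Import all_boot.
From Stdlib Require Import ClassicalEpsilon.
From mathcomp Require Import zify.
Set Implicit Arguments. Unset Strict Implicit. Unset Printing Implicit Defensive.

Section Aux.
Variable n : nat.
Variable I : pred (mono n).

Definition Fv (k : nat) (beta : seq nat) : nat := odflt 0 (f I k.+1 beta).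

Fixpoint E (k : nat) : seq (seq nat) :=
  if k is k'.+1 then [seq rcons beta a | beta <- E k', a <- iota 0 (Fv k' beta)]
  else [:: [::]].

Lemma inbox_succ k alpha :
  inbox I k.+1 alpha <-> exists beta a,
    [/\ alpha = rcons beta a, inbox I k beta & ltf a (f I k.+1 beta)].
Proof.
split.
- case=> Hs Hj. case/lastP: alpha Hs Hj => [|beta a] //.
  rewrite size_rcons => -[Hs] Hj. exists beta, a; split => //.
  + split => // j Hjk. have := Hj j (ltnW Hjk).
    by rewrite nth_rcons Hs Hjk -cats1 takel_cat // Hs ltnW.
  + have := Hj k (ltnSn k).
    by rewrite nth_rcons Hs ltnn eqxx -cats1 take_size_cat.
- case=> beta [a [-> [Hs Hj] Ha]]. split; first by rewrite size_rcons Hs.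
  move=> j; rewrite ltnS leq_eqVlt => /orP[/eqP->|Hjk].
  + by rewrite nth_rcons Hs ltnn eqxx -cats1 take_size_cat.
  + rewrite nth_rcons Hs Hjk -cats1 takel_cat ?Hs ?(ltnW Hjk) //; exact: Hj.
Qed.

Lemma E_spec k : (forall j beta, j < k -> f I j.+1 beta <> None) ->
  uniq (E k) /\ forall alpha, alpha \in E k <-> inbox I k alpha.
Proof.
elim: k => [|k IH] Hf.
- split => // alpha; rewrite inE; split.
  + by move/eqP->; split => // j.
  + by case=> /size0nil ->.
- have [Hu Hm] := IH (fun j beta Hj => Hf j beta (ltnW Hj)).
  split.
  + rewrite /=. apply: allpairs_uniq_dep => //.
    * move=> beta _; exact: iota_uniq.
    * move=> [b1 a1] [b2 a2] _ _ /= /rcons_inj [-> ->] //.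
  + move=> alpha; rewrite inbox_succ /=; split.
    * case/allpairsPdep => beta [a [Hb Ha ->]]. exists beta, a; split => //; first by apply/Hm.
      move: Ha; rewrite mem_iota add0n /Fv. by case: (f I k.+1 beta) => [v|] //=.
    * case=> beta [a [-> Hb Ha]]. apply/allpairsPdep. exists beta, a; split => //; first by apply/Hm.
      rewrite mem_iota add0n /Fv. have := Hf k beta (ltnSn k).
      by case: (f I k.+1 beta) Ha => [v|] //=.
Qed.

Lemma size_E k : size (E k.+1) = \sum_(beta <- E k) Fv k beta.
Proof.
by rewrite /= size_allpairs_dep sumnE big_map; apply: eq_bigr => b _; rewrite size_iota.
Qed.

Definition Z : mono n := [ffun _ => 0].

Lemma ev_Z j : ev Z j = 0.
Proof. by rewrite /ev; case: insub => [i|] //=; rewrite ffunE. Qed.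

Lemma Z_notin w j : last_gen I w -> 0 < ev w j -> Z \notin I.
Proof.
case=> [[_ Hm] _ _] Hj; apply/negP => HZ.
have Hw : Z = w by apply: Hm => //; apply/forallP => i; rewrite ffunE.
by move: Hj; rewrite -Hw ev_Z.
Qed.

Definition sh (b : mono n) (i : 'I_n) (k : nat) : mono n := [ffun x => b x + (x == i) * k].

Lemma sh_stable (i j : 'I_n) : strongly_stable I -> j < i ->
  forall k b, sh b i k \in I -> sh b j k \in I.
Proof.
move=> Hs Hji; elim=> [|k IH] b.
- have E0 : forall l, sh b l 0 = b by move=> l; apply/ffunP => x; rewrite ffunE muln0 addn0.
  by rewrite !E0.
- have E1 : forall l, sh b l k.+1 = mulx l (sh b l k).
    by move=> l; apply/ffunP => x; rewrite !ffunE; case: (x == l) => /=; lia.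
  have E2 : forall l, mulx j (sh b l k) = sh (mulx j b) l k.
    by move=> l; apply/ffunP => x; rewrite !ffunE; case: (x == l); case: (x == j) => /=; lia.
  move=> H. rewrite E1 E2; apply: IH; rewrite -E2; apply: (Hs _ i j Hji); by rewrite -E1.
Qed.

Lemma xmon_Z beta i : (forall x, nth 0 beta x = 0) -> xmon n beta i 0 = Z.
Proof. move=> H; apply/ffunP => x; rewrite !ffunE H; by case: ifP => //; case: ifP. Qed.

Lemma zero_box k : Z \notin I -> inbox I k (nseq k 0).
Proof.
move=> HZ; split; first by rewrite size_nseq.
move=> j Hj; rewrite nth_nseq Hj /f.
case: excluded_middle_informative => // h /=.
case: ex_minnP => v Hv _. rewrite lt0n; apply/negP => /eqP Hv0; move: Hv.
have HX : xmon n (take j (nseq k 0)) j.+1 0 = Z.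
  apply: xmon_Z => x. rewrite take_nseq; last exact: ltnW.
  rewrite nth_nseq; by case: ifP.
by rewrite Hv0 HX (negbTE HZ).
Qed.

End Aux.

Definition pb (P : Prop) : bool := if excluded_middle_informative P then true else false.
Lemma pbP P : pb P <-> P.
Proof. rewrite /pb; case: excluded_middle_informative => H; split => // /H //. Qed.

Lemma sum_zero k (a : nat -> nat) j : \sum_(i < k) a i = 0 -> j < k -> a j = 0.
Proof. move=> H Hj; apply/eqP; rewrite -leqn0 -H (bigD1 (Ordinal Hj)) //=; exact: leq_addr. Qed.

Lemma C1 k (a b : nat -> nat) : (forall j, j < k -> b j = 0) -> dge k a b.
Proof.
move=> Hb. have Sb : \sum_(j < k) b j = 0 by rewrite big1 // => j _; apply: Hb.
case: (posnP (\sum_(j < k) a j)) => Ha.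
- left => j Hj. rewrite Hb //. exact: (sum_zero Ha Hj).
- right; left; by rewrite Sb.
Qed.

Lemma C2 k (a b : nat -> nat) : (forall j, j < k -> a j = 0) -> dge k a b ->
  forall j, j < k -> b j = 0.
Proof.
move=> Ha. have Sa : \sum_(j < k) a j = 0 by rewrite big1 // => j _; apply: Ha.
move=> [H|[H|[H _]]] j Hj.
- by rewrite -H // Ha.
- by move: H; rewrite Sa ltn0.
- apply: (sum_zero _ Hj); by rewrite -H.
Qed.

Theorem lemma2p5 (n : nat) (I : pred (mono n)) (w : mono n) (mu : nat) :
  monomial_ideal I -> strongly_stable I ->
  last_gen I w ->
  2 <= mu <= n -> 0 < ev w mu.-1 -> (forall j, mu <= j -> ev w j = 0) ->
  (exists t, 0 < t /\ xmon n (nseq (mu - 2) 0) mu.-1 t \in I) ->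
  exists s1 s2 : seq (seq nat),
    [/\ uniq s1 /\ (forall alpha, alpha \in s1 <-> calI_last I w mu alpha),
        uniq s2 /\ (forall alpha, alpha \in s2 <-> calI I (mu - 2) alpha),
        (forall alpha, alpha \in s2 -> f I mu.-1 alpha <> None),
        size s1 <= \sum_(alpha <- s2) odflt 0 (f I mu.-1 alpha) &
        (size s1 = \sum_(alpha <- s2) odflt 0 (f I mu.-1 alpha) <->
         forall j, j < mu.-1 -> ev w j = 0)].
Proof.
move=> Hmi Hss Hlg /andP[Hmu Hmun] Hwpos Hwz [t [Ht HtI]].
case: mu Hmu Hmun Hwpos Hwz HtI => [|[|m]] // _ Hmn Hwpos Hwz HtI.
rewrite !subSS subn0 /= in HtI *.
have Hm : m < n by apply: leq_trans Hmn.
pose i0 : 'I_n := Ordinal Hm.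
have HZ := Z_notin Hlg Hwpos.
have Hsh : sh (Z n) i0 t \in I.
  have -> : sh (Z n) i0 t = xmon n (nseq m 0) m.+1 t; last by [].
  apply/ffunP => x; rewrite !ffunE /= -val_eqE /=.
  case: (ltngtP x m) => Hx.
  - by rewrite nth_nseq Hx mul0n.
  - by rewrite mul0n.
  - by rewrite mul1n.
have A : forall j beta, j <= m -> xmon n beta j.+1 t \in I.
  move=> j beta Hj.
  have Hjn : j < n by exact: leq_ltn_trans Hj Hm.
  pose jo : 'I_n := Ordinal Hjn.
  have Hsj : sh (Z n) jo t \in I.
    move: Hj; rewrite leq_eqVlt => /orP[/eqP Ej|Hj].
    - have -> : jo = i0 by apply: val_inj; rewrite /= Ej.
      exact: Hsh.
    - exact: (@sh_stable n I i0 jo Hss Hj t (Z n) Hsh).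
  apply: (Hmi _ _ Hsj); apply/forallP => x; rewrite !ffunE /= -val_eqE /=.
  case: eqP => [->|_]; first by rewrite ltnn mul1n.
  by rewrite mul0n.
have Hf : forall j beta, j < m.+1 -> f I j.+1 beta <> None.
  move=> j beta Hj; rewrite /f; case: excluded_middle_informative => // H.
  by exfalso; apply: H; exists t; apply: A.
have [U2 M2] := E_spec (fun j b (Hj : j < m) => Hf j b (ltnW Hj)).
have [U M] := E_spec Hf.
pose P := fun a : seq nat => pb (dge m.+1 (nth 0 a) (ev w)).
exists (filter P (E I m.+1)), (E I m). split.
- split; first exact: filter_uniq.
  move=> alpha; rewrite mem_filter /calI_last /=; split.
  + by case/andP => /pbP H /M Hi.
  + case=> Hi H. apply/andP; split; [exact/pbP | exact/M].
- by split.
- move=> alpha _; exact: Hf.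
- rewrite size_filter; apply: leq_trans (count_size _ _) _; rewrite size_E; exact: leqnn.
- rewrite size_filter (_ : \sum_(alpha <- E I m) odflt 0 (f I m.+1 alpha) = size (E I m.+1));
    last by rewrite size_E.
  split.
  + move/eqP; rewrite -all_count => /allP Hall.
    have Hz : nseq m.+1 0 \in E I m.+1 by apply/M; exact: zero_box.
    move/pbP: (Hall _ Hz); apply: C2 => j Hj; by rewrite nth_nseq Hj.
  + move=> Hw0; apply/eqP; rewrite -all_count; apply/allP => alpha _; apply/pbP.
    exact: C1.
Qed.
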